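(* Let $I_1,\dots,I_n$ be i.i.d. Bernoulli random variables with $\Pr[I_i=1]=p=1-q$, $0<q<1$, let $I_{n+1}=\prod_{j=1}^n(1-I_j)$, and let $P_i=I_i/\sum_{j=1}^{n+1}I_j$ for $i=1,\dots,n+1$. Let $\pi_1,\dots,\pi_n\ge0$ with $\pi_i>0$ for some $i$, and let $W_i=\big(\sum_{j=1}^{n}\pi_j\big)P_i+\pi_iP_{n+1}$ for $i=1,\dots,n$ (homogeneous tontine with passive administrator). Then $E[W_i]=\pi_i$ for all $i=1,\dots,n$ if and only if $\pi_1=\pi_2=\dots=\pi_n$. *)

(* Defs.v *)
(* finite probability space {0,1}^n with product Bernoulli law. *)
From HB Require Import structures.
From mathcomp Require Import all_boot all_order all_algebra.
Set Implicit Arguments. Unset Strict Implicit. Unset Printing Implicit Defensive.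
Import Order.TTheory GRing.Theory Num.Theory.
Local Open Scope ring_scope.

Definition outcome (n : nat) := {ffun 'I_n -> bool}.

Definition bern_prob {R : realFieldType} (n : nat) (q : R) (w : outcome n) : R :=
  \prod_(j < n) (if w j then 1 - q else q).

Definition Ind {R : realFieldType} (n : nat) (i : 'I_n) (w : outcome n) : R :=
  (w i)%:R.

Definition Ilast {R : realFieldType} (n : nat) (w : outcome n) : R :=
  \prod_(j < n) (1 - Ind j w).

Definition Itot {R : realFieldType} (n : nat) (w : outcome n) : R :=
  \sum_(j < n) Ind j w + Ilast w.

Definition Pshare {R : realFieldType} (n : nat) (i : 'I_n) (w : outcome n) : R :=
  Ind i w / Itot w.
Definition Plast {R : realFieldType} (n : nat) (w : outcome n) : R :=
  Ilast w / Itot w.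

Definition Wpay {R : realFieldType} (n : nat) (pi : 'I_n -> R) (i : 'I_n)
  (w : outcome n) : R :=
  (\sum_(j < n) pi j) * Pshare i w + pi i * Plast w.

Definition Ebern {R : realFieldType} (n : nat) (q : R) (X : outcome n -> R) : R :=
  \sum_(w : outcome n) bern_prob q w * X w.

(* Main.v *)
Require Import Defs.
From mathcomp Require Import all_boot all_order all_algebra all_fingroup.
Import Order.TTheory GRing.Theory Num.Theory.
Local Open Scope ring_scope.

Section S.
Variables (R : realFieldType) (n : nat) (q : R).

Definition phi (i j : 'I_n) (w : outcome n) : outcome n := [ffun k => w (tperm i j k)].

Lemma phiK (i j : 'I_n) : cancel (phi i j) (phi i j).
Proof. by move=> w; apply/ffunP=> k; rewrite !ffunE tpermK. Qed.

Lemma bern_phi (i j : 'I_n) w : bern_prob q (phi i j w) = bern_prob q w.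
Proof.
rewrite /bern_prob (reindex_inj (@perm_inj _ (tperm i j))) /=.
by apply: eq_bigr => k _; rewrite ffunE tpermK.
Qed.

Lemma Itot_phi (i j : 'I_n) w : Itot (R:=R) (phi i j w) = Itot w.
Proof.
rewrite /Itot /Ilast (reindex_inj (@perm_inj _ (tperm i j))) /=.
rewrite [X in _ + X](reindex_inj (@perm_inj _ (tperm i j))) /=.
congr (_ + _); [apply: eq_bigr|apply: eq_bigr] => k _; by rewrite /Ind ffunE tpermK.
Qed.

Lemma EP_sym (i j : 'I_n) : Ebern q (Pshare (R:=R) i) = Ebern q (Pshare j).
Proof.
rewrite /Ebern (reindex_inj (can_inj (phiK i j))) /=.
apply: eq_bigr => w _; rewrite bern_phi /Pshare Itot_phi /Ind ffunE tpermL //.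
Qed.

Lemma Ind_ge0 (k : 'I_n) w : 0 <= Ind (R:=R) k w.
Proof. by rewrite /Ind ler0n. Qed.

Lemma Ilast_ge0 (w : outcome n) : 0 <= Ilast (R:=R) w.
Proof. apply: prodr_ge0 => k _; rewrite /Ind; by case: (w k); rewrite ?subrr ?subr0. Qed.

Lemma Itot_gt0 (w : outcome n) : 0 < Itot (R:=R) w.
Proof.
rewrite /Itot; case: (boolP [exists k, w k]) => [/existsP[k wk]|].
  apply: (@lt_le_trans _ _ 1); first exact: ltr01.
  rewrite -[1]addr0 lerD ?Ilast_ge0 //.
  rewrite (bigD1 k) //= /Ind wk -[X in X <= _]addr0 lerD //.
  by apply: sumr_ge0 => l _; apply: Ind_ge0.
rewrite negb_exists => /forallP H.
rewrite big1 ?add0r; last by move=> k _; rewrite /Ind (negbTE (H k)).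
rewrite /Ilast big1 ?ltr01 // => k _; by rewrite /Ind (negbTE (H k)) subr0.
Qed.

Definition w0 : outcome n := [ffun => false].

Lemma Plast_eq (w : outcome n) : Plast (R:=R) w = (w == w0)%:R.
Proof.
rewrite /Plast; case: eqP => [->|ne].
  have H1 : Ilast (R:=R) w0 = 1 by rewrite /Ilast big1 // => k _; rewrite /Ind ffunE subr0.
  have H2 : \sum_(k < n) Ind (R:=R) k w0 = 0 by rewrite big1 // => k _; rewrite /Ind ffunE.
  by rewrite /Itot H1 H2 add0r divr1.
have [k wk] : exists k, w k.
  apply/existsP; apply: contraT; rewrite negb_exists => /forallP H.
  by case: ne; apply/ffunP => k; rewrite ffunE (negbTE (H k)).
by rewrite /Ilast (bigD1 k) //= /Ind wk subrr mul0r mul0r.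
Qed.

Lemma EPlast : Ebern q (Plast (R:=R) (n:=n)) = q ^+ n.
Proof.
rewrite /Ebern (bigD1 w0) //= big1 ?addr0.
  rewrite Plast_eq eqxx mulr1 /bern_prob.
  by rewrite (eq_bigr (fun _ => q)) ?prodr_const ?card_ord // => k _; rewrite ffunE.
by move=> w ne; rewrite Plast_eq (negbTE ne) mulr0.
Qed.

Lemma Esum1 : \sum_(w : outcome n) bern_prob q w = 1.
Proof.
have := bigA_distr_bigA (fun (j : 'I_n) (b : bool) => if b then 1 - q else q).
rewrite /bern_prob => <-.
by rewrite big1 // => k _; rewrite big_bool /= subrK.
Qed.

Lemma Etot : \sum_(i < n) Ebern q (Pshare (R:=R) i) + Ebern q (Plast (n:=n)) = 1.
Proof.
rewrite /Ebern exchange_big /= -big_split /= -Esum1; apply: eq_bigr => w _.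
rewrite -mulr_sumr -mulrDr /Pshare /Plast -mulr_suml -mulrDl.
by rewrite divff ?mulr1 // gt_eqF // Itot_gt0.
Qed.

Lemma EW (pi : 'I_n -> R) i : Ebern q (Wpay pi i) =
  (\sum_(j < n) pi j) * Ebern q (Pshare i) + pi i * Ebern q (Plast (n:=n)).
Proof.
rewrite /Ebern /Wpay mulr_sumr mulr_sumr -big_split /=; apply: eq_bigr => w _.
by rewrite mulrDr mulrCA [_ * (pi i * _)]mulrCA.
Qed.

End S.

Theorem mainTheorem13 (R : realFieldType) (n : nat) (q : R) (pi : 'I_n -> R) :
  0 < q -> q < 1 ->
  (forall i, 0 <= pi i) -> (exists i, 0 < pi i) ->
  ((forall i, Ebern q (Wpay pi i) = pi i) <-> (forall i j, pi i = pi j)).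
Proof.
move=> q0 q1 _ [i0 _].
have n0 : (0 < n)%N by case: n pi i0 => [|m] ? [].
have qn1 : q ^+ n < 1 by rewrite exprn_ilt1 ?(ltW q0) // -lt0n.
have qn0 : 1 - q ^+ n != 0 by rewrite subr_eq0 gt_eqF.
split=> [H i j|H i].
  have E k : pi k = (\sum_(j < n) pi j) * Ebern q (Pshare (R:=R) i0) / (1 - q ^+ n).
    apply: (canRL (mulfK qn0)); rewrite (@EP_sym R n q i0 k).
    have := H k; rewrite EW EPlast => Hk.
    by rewrite mulrBr mulr1 -{1}Hk addrK.

  by rewrite !E.
have Hs : \sum_(j < n) pi j = pi i *+ n.
  by rewrite (eq_bigr (fun _ => pi i)) ?sumr_const ?card_ord // => j _; apply: H.
have Ht := @Etot R n q.
rewrite (eq_bigr (fun _ => Ebern q (Pshare (R:=R) i))) ?sumr_const ?card_ord in Ht;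
  last by move=> j _; apply: EP_sym.
rewrite EPlast in Ht; rewrite EW EPlast Hs.
by rewrite mulrnAl -mulrnAr -mulrDr Ht mulr1.
Qed.
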